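(* For every $n\ge0$ and $r\in\mathcal{Y}_n$, in the Hopf algebra $\mathcal{Y}Sym$, $$\Delta(M_r)=\sum_{r=s\backslash t}M_s\otimes M_t,$$ the sum over all pairs of trees $(s,t)$ (with $s\in\mathcal{Y}_j$, $t\in\mathcal{Y}_{n-j}$ for some $0\le j\le n$) such that $r=s\backslash t$.
   Context: $\mathcal{Y}_n$ is the set of rooted planar binary trees with $n$ internal nodes ($n+1$ leaves); $\mathcal{Y}_0=\{|\}$. For $s\in\mathcal{Y}_p,t\in\mathcal{Y}_q$, $s\vee t\in\mathcal{Y}_{p+q+1}$ has a root with left subtree $s$ and right subtree $t$; each $t\in\mathcal{Y}_n$, $n\ge1$, is uniquely $t_l\vee t_r$. The Tamari order on $\mathcal{Y}_n$ is generated by replacing a subtree $(a\vee b)\vee c$ by the larger $a\vee(b\vee c)$. $s\backslash t$ is defined by $|\backslash t=t$, $s\backslash t=s_l\vee(s_r\backslash t)$ (graft the root of $t$ onto the rightmost leaf of $s$). $\mathcal{Y}Sym$ (the graded dual of the Loday–Ronco Hopf algebra) is the graded Hopf algebra over $\mathbb{Q}$ with basis $\{F_t\}$, $t\in\bigsqcup_n\mathcal{Y}_n$, $F_t$ of degree $n$ for $t\in\mathcal{Y}_n$. Number the leaves of $t\in\mathcal{Y}_n$ by $0,\dots,n$ left to right. Splitting $t$ at leaf $i$ gives a pair $t\to(t_0,t_1)$ (the pieces left and right of the path from leaf $i$ to the root), defined recursively: $|$ splits at its unique leaf as $(|,|)$; if $t=t_l\vee t_r$ and leaf $i$ lies in $t_l$,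 where $t_l$ splits there as $(a,b)$, then $t\to(a,b\vee t_r)$; if leaf $i$ lies in $t_r$, where $t_r$ splits there as $(c,d)$, then $t\to(t_l\vee c,d)$. The coproduct is $\Delta(F_t)=\sum_{i=0}^n F_{t_0}\otimes F_{t_1}$ over these splittings. (The product, not needed here, is described by grafting pieces of divisions of $t$ onto leaves of $s$.) The monomial basis is $M_t:=\sum_{t\le s}\mu_{\mathcal{Y}_n}(t,s)F_s$, with $\mu_{\mathcal{Y}_n}$ the Möbius function of the Tamari order, equivalently $F_t=\sum_{s\ge t}M_s$. *)

(* Defs.v *)
From HB Require Import structures.
From mathcomp Require Import all_boot all_order all_algebra.
From Stdlib Require Import Relations ClassicalEpsilon.
Set Implicit Arguments. Unset Strict Implicit. Unset Printing Implicit Defensive.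
Import GRing.Theory Num.Theory.
Local Open Scope ring_scope.

(** Rooted planar binary trees; [Leaf] is the tree | with no internal node,
    [Node l r] is  l \vee r. *)
Inductive tree : Type := Leaf | Node of tree & tree.

Fixpoint tree_eqb (s t : tree) : bool :=
  match s, t with
  | Leaf, Leaf => true
  | Node a b, Node c d => tree_eqb a c && tree_eqb b d
  | _, _ => false
  end.

Lemma tree_eqP : Equality.axiom tree_eqb.
Proof.
elim=> [|a IHa b IHb] [|c d] /=; try by constructor.
case: (IHa c) => [->|Hac]; last by constructor; case.
case: (IHb d) => [->|Hbd]; last by constructor; case.
by constructor.
Qed.

HB.instance Definition _ := hasDecEq.Build tree tree_eqP.

(** number of internal nodes: t \in Y_n  iff  nnodes t = n *)
Fixpoint nnodes (t : tree) : nat :=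
  match t with Leaf => 0%N | Node l r => (nnodes l + nnodes r).+1 end.

Fixpoint trees_depth (d : nat) : seq tree :=
  match d with
  | 0 => [:: Leaf]
  | d'.+1 => Leaf :: [seq Node l r | l <- trees_depth d', r <- trees_depth d']
  end.

(** Y_n, enumerated without repetition (a tree with n internal nodes has depth <= n). *)
Definition trees (n : nat) : seq tree := [seq t <- trees_depth n | nnodes t == n].

Inductive rot : tree -> tree -> Prop :=
  | rot_here a b c : rot (Node (Node a b) c) (Node a (Node b c))
  | rot_left l l' r : rot l l' -> rot (Node l r) (Node l' r)
  | rot_right l r r' : rot r r' -> rot (Node l r) (Node l r').

Definition tamari_le : tree -> tree -> Prop := clos_refl_trans tree rot.

Definition tle (t s : tree) : bool :=
  if excluded_middle_informative (tamari_le t s) then true else false.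

(** Möbius function of the Tamari poset, by the usual recursion
    mu(t,t) = 1, mu(t,s) = - sum_{t <= u < s} mu(t,u) for t < s, 0 otherwise;
    computed with fuel (any chain in Y_n has fewer than #Y_n + 1 elements,
    so the fuel below is always sufficient). *)
Fixpoint mu_f (k : nat) (t s : tree) : rat :=
  match k with
  | 0 => 0
  | k'.+1 =>
      if t == s then 1
      else if tle t s then
        - \sum_(u <- trees (nnodes t) | tle t u && tle u s && (u != s)) mu_f k' t u
      else 0
  end.

Definition mu (t s : tree) : rat := mu_f (size (trees (nnodes t))).+1 t s.

(** Grafting s \ t: graft the root of t onto the rightmost leaf of s. *)
Fixpoint over (s t : tree) : tree :=
  match s with Leaf => t | Node l r => Node l (over r t) end.

(** Splitting t at leaf i (leaves numbered 0..nnodes t from left to right). *)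
Fixpoint tsplit (t : tree) (i : nat) : tree * tree :=
  match t with
  | Leaf => (Leaf, Leaf)
  | Node l r =>
      if (i <= nnodes l)%N then let: (a, b) := tsplit l i in (a, Node b r)
      else let: (c, d) := tsplit r (i - (nnodes l).+1) in (Node l c, d)
  end.

(** Elements of YSym (resp. YSym ⊗ YSym) as finite formal Q-linear combinations
    of the basis F_t (resp. F_a ⊗ F_b). *)
Definition elt := seq (rat * tree).
Definition elt2 := seq (rat * (tree * tree)).

Definition coef2 (x : elt2) (a b : tree) : rat :=
  \sum_(p <- x | p.2 == (a, b)) p.1.

Definition Mb (t : tree) : elt :=
  [seq (mu t s, s) | s <- trees (nnodes t) & tle t s].

(** the coproduct, extended linearly from Delta(F_t) = sum_i F_{t_0} ⊗ F_{t_1} *)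
Definition Delta (x : elt) : elt2 :=
  flatten [seq [seq (p.1, tsplit p.2 i) | i <- iota 0 (nnodes p.2).+1] | p <- x].

Definition tensor (x y : elt) : elt2 :=
  [seq (p.1 * q.1, (p.2, q.2)) | p <- x, q <- y].

Definition decomps (r : tree) : seq (tree * tree) :=
  [seq st <- flatten [seq [seq (s, t) | s <- trees j, t <- trees (nnodes r - j)]
                         | j <- iota 0 (nnodes r).+1]
     | over st.1 st.2 == r].

Definition rhs (r : tree) : elt2 :=
  flatten [seq tensor (Mb st.1) (Mb st.2) | st <- decomps r].

(* Main.v *)
Require Import Defs.
From mathcomp Require Import all_boot all_order all_algebra.
From Stdlib Require Import Relations ClassicalEpsilon.
From mathcomp Require Import zify.
Import Defs.
Set Implicit Arguments. Unset Strict Implicit. Unset Printing Implicit Defensive.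
Import GRing.Theory Num.Theory.
Local Open Scope ring_scope.



Lemma tleP t s : reflect (tamari_le t s) (tle t s).
Proof. by rewrite /tle; case: excluded_middle_informative => h; constructor. Qed.

Lemma rot_nnodes x y : Defs.rot x y -> nnodes x = nnodes y.
Proof. elim=> //= *; lia. Qed.

Lemma tle_nnodes x y : tamari_le x y -> nnodes x = nnodes y.
Proof. elim=> //; [exact: rot_nnodes | move=> *; congruence]. Qed.

Fixpoint rho (t : tree) : nat :=
  match t with Leaf => 0%N | Node l r => (rho l + rho r + nnodes r)%N end.

Lemma rot_rho x y : Defs.rot x y -> (rho x < rho y)%N.
Proof. elim=> /= [a b c|l l' r _ h|l r r' h1 h2]; [lia|lia|rewrite -(rot_nnodes h1); lia]. Qed.

Lemma tle_rho x y : tamari_le x y -> x = y \/ (rho x < rho y)%N.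
Proof.
elim=> [a b /rot_rho|a|a b c _ [->|h1] _ [<-|h2]]; auto; right; lia.
Qed.

Lemma tle_antisym x y : tamari_le x y -> tamari_le y x -> x = y.
Proof. move=> /tle_rho [//|h] /tle_rho [//|h']; lia. Qed.

Lemma tle_trans x y z : tamari_le x y -> tamari_le y z -> tamari_le x z.
Proof. exact: rt_trans. Qed.

Lemma tle_refl x : tamari_le x x.
Proof. exact: rt_refl. Qed.

Lemma tle_step x y : Defs.rot x y -> tamari_le x y.
Proof. exact: rt_step. Qed.

Lemma tle_nodel l l' r : tamari_le l l' -> tamari_le (Node l r) (Node l' r).
Proof.
elim=> [a b h|a|a b c _ h1 _ h2]; [apply: tle_step; exact: rot_left|exact: tle_refl|exact: tle_trans h1 h2].
Qed.

Lemma tle_noder l r r' : tamari_le r r' -> tamari_le (Node l r) (Node l r').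
Proof.
elim=> [a b h|a|a b c _ h1 _ h2]; [apply: tle_step; exact: rot_right|exact: tle_refl|exact: tle_trans h1 h2].
Qed.

Lemma rot_over s s' t : Defs.rot s s' -> Defs.rot (over s t) (over s' t).
Proof. elim=> /= *; [exact: rot_here|exact: rot_left|exact: rot_right]. Qed.

Lemma tle_overl s s' t : tamari_le s s' -> tamari_le (over s t) (over s' t).
Proof.
elim=> [a b h|a|a b c _ h1 _ h2]; [apply: tle_step; exact: rot_over|exact: tle_refl|exact: tle_trans h1 h2].
Qed.

Lemma tle_overr s t t' : tamari_le t t' -> tamari_le (over s t) (over s t').
Proof. elim: s => [|l _ r IH] //= h; apply: tle_noder; exact: IH. Qed.

Lemma over_node a b c : tamari_le (Node (over a b) c) (over a (Node b c)).
Proof.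
elim: a => [|x _ y IH] /=; first exact: tle_refl.
apply: tle_trans (tle_step (rot_here _ _ _)) _; exact: tle_noder.
Qed.

Lemma tsplit_node l r i : tsplit (Node l r) i =
  if (i <= nnodes l)%N then ((tsplit l i).1, Node (tsplit l i).2 r)
  else (Node l (tsplit r (i - (nnodes l).+1)).1, (tsplit r (i - (nnodes l).+1)).2).
Proof. by rewrite /=; case: ifP; case: tsplit. Qed.

Lemma tsplit_size u i :
  nnodes (tsplit u i).1 = minn i (nnodes u) /\
  nnodes (tsplit u i).2 = (nnodes u - minn i (nnodes u))%N.
Proof.
elim: u i => [|l IHl r IHr] i; first by rewrite /= minn0.
rewrite tsplit_node; case: ifP => h /=.
  by case: (IHl i) => -> ->; lia.
by case: (IHr (i - (nnodes l).+1)%N) => -> ->; lia.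
Qed.

Lemma tsplit0 t : tsplit t 0 = (Leaf, t).
Proof. elim: t => [|l IHl r _] //=; by rewrite IHl. Qed.

Lemma tsplit_over s t : tsplit (over s t) (nnodes s) = (s, t).
Proof.
elim: s => [|l _ r IH]; first exact: tsplit0.
change (tsplit (Node l (over r t)) (nnodes (Node l r)) = (Node l r, t)).
rewrite tsplit_node /= ifF; last lia.
have -> : ((nnodes l + nnodes r).+1 - (nnodes l).+1 = nnodes r)%N by lia.
by rewrite IH.
Qed.

Lemma tle_split_over r i : tamari_le r (over (tsplit r i).1 (tsplit r i).2).
Proof.
elim: r i => [|l IHl r IHr] i; first exact: tle_refl.
rewrite tsplit_node; case: ifP => h /=.
  apply: tle_trans (tle_nodel _ (IHl i)) _; exact: over_node.
exact: tle_noder.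
Qed.

Definition ple (p q : tree * tree) := tamari_le p.1 q.1 /\ tamari_le p.2 q.2.

Lemma rot_split u u' i : Defs.rot u u' -> ple (tsplit u i) (tsplit u' i).
Proof.
move=> h; elim: h i => [a b c|l l' r h IH|l r r' h IH] i.
- rewrite (tsplit_node (Node a b) c) (tsplit_node a (Node b c)) (tsplit_node a b) (tsplit_node b c).
  have -> : nnodes (Node a b) = (nnodes a + nnodes b).+1 by [].
  have -> : (i - (nnodes a + nnodes b).+2 = i - (nnodes a).+1 - (nnodes b).+1)%N by lia.
  case: (leqP i (nnodes a)) => h1; case: (leqP i (nnodes a + nnodes b).+1) => h2;
  case: (leqP (i - (nnodes a).+1) (nnodes b)) => h3; try lia; rewrite /=;
  split; try (apply: tle_refl); apply: tle_step; apply: rot_here.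
- rewrite !tsplit_node -(rot_nnodes h); case: ifP => h1 /=.
    by case: (IH i) => h2 h3; split => //; apply: tle_nodel.
  split; [apply: tle_step; exact: rot_left | exact: tle_refl].
- rewrite !tsplit_node; case: ifP => h1 /=.
    split; [exact: tle_refl | apply: tle_step; exact: rot_right].
  by case: (IH (i - (nnodes l).+1)%N) => h2 h3; split => //; apply: tle_noder.
Qed.

Lemma tle_split u u' i : tamari_le u u' -> ple (tsplit u i) (tsplit u' i).
Proof.
elim=> [a b h|a|a b c _ [h1 h2] _ [h3 h4]]; first exact: rot_split.
  split; exact: tle_refl.
split; [exact: tle_trans h1 h3 | exact: tle_trans h2 h4].
Qed.

Lemma galois u a b :
  ple (tsplit u (nnodes a)) (a, b) <-> tamari_le u (over a b).
Proof.
split.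
  case=> /= h1 h2; apply: tle_trans (tle_split_over u (nnodes a)) _.
  apply: tle_trans (tle_overl _ h1) _; exact: tle_overr.
by move/(tle_split (nnodes a)); rewrite tsplit_over.
Qed.



Fixpoint height (t : tree) : nat :=
  match t with Leaf => 0%N | Node l r => (maxn (height l) (height r)).+1 end.

Lemma mem_node_allpairs l r s :
  (Node l r \in [seq Node x y | x <- s, y <- s]) = (l \in s) && (r \in s).
Proof.
apply/allpairsP/andP => [[[x y] [hx hy [-> ->]]] //|[hl hr]].
by exists (l, r).
Qed.

Lemma mem_trees_depth d t : (t \in trees_depth d) = (height t <= d)%N.
Proof.
elim: d t => [|d IH] [|l r] //=.
rewrite in_cons /= mem_node_allpairs !IH ltnS geq_max //.
Qed.

Lemma height_nnodes t : (height t <= nnodes t)%N.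
Proof. elim: t => //= l hl r hr; lia. Qed.

Lemma mem_trees n t : (t \in trees n) = (nnodes t == n).
Proof.
rewrite mem_filter mem_trees_depth; case: eqP => // <-.
exact: height_nnodes.
Qed.

Lemma uniq_trees_depth d : uniq (trees_depth d).
Proof.
elim: d => //= d IH; rewrite allpairs_uniq // ?andbT.
  by apply/allpairsP => -[[x y] [_ _]].
by move=> [x y] [x' y'] _ _ [-> ->].
Qed.

Lemma uniq_trees n : uniq (trees n).
Proof. exact/filter_uniq/uniq_trees_depth. Qed.

Definition cnt (t s : tree) : nat :=
  count (fun u => tle t u && tle u s) (trees (nnodes t)).

Lemma count_lt (T : eqType) (P1 P2 : pred T) (s : seq T) x :
  subpred P1 P2 -> x \in s -> P2 x -> ~~ P1 x -> (count P1 s < count P2 s)%N.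
Proof.
move=> sub; elim: s => //= y s IH; rewrite in_cons => /orP [/eqP <-|hx] h2 h1.
  rewrite h2 (negbTE h1) /= add0n add1n ltnS; exact: sub_count.
have := IH hx h2 h1; case h: (P1 y); first by rewrite (sub y h) /=; lia.
case: (P2 y) => /=; lia.
Qed.

Lemma cnt_lt t u s : tamari_le t u -> tamari_le u s -> u != s -> (cnt t u < cnt t s)%N.
Proof.
move=> htu hus hne; rewrite /cnt.
apply: (@count_lt _ _ _ _ s).
- move=> x /andP [/tleP h1 /tleP h2]; apply/andP; split; apply/tleP => //.
  exact: tle_trans h2 hus.
- by rewrite mem_trees (tle_nnodes (tle_trans htu hus)).
- by apply/andP; split; apply/tleP; [exact: tle_trans htu hus|exact: tle_refl].
- apply/negP => /andP [_ /tleP h]; move/negP: hne; apply; apply/eqP.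
  exact: tle_antisym hus h.
Qed.

Lemma cnt_pos t s : tamari_le t s -> (0 < cnt t s)%N.
Proof.
move=> h; rewrite /cnt -has_count; apply/hasP; exists t; first by rewrite mem_trees.
by apply/andP; split; apply/tleP => //; exact: tle_refl.
Qed.

Lemma mu_f_stable k t s : (cnt t s <= k)%N -> mu_f k.+1 t s = mu_f k t s.
Proof.
elim: k s => [|k IH] s hc.
  rewrite /=; case: eqP => [e|_].
    by subst; have := cnt_pos (tle_refl s); lia.
  case: tleP => // h; have := cnt_pos h; lia.
rewrite [LHS]/= [RHS]/=; case: eqP => // _; case: tleP => // h.
congr (- _); apply: eq_bigr => u /andP [/andP [/tleP h1 /tleP h2] h3].
apply: IH; have := cnt_lt h1 h2 h3; lia.
Qed.

Lemma mu_fE k t s : (cnt t s <= k)%N -> mu_f k t s = mu t s.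
Proof.
have H : forall k m, (cnt t s <= k)%N -> mu_f (k + m) t s = mu_f k t s.
  move=> k0 m h; elim: m => [|m IHm]; first by rewrite addn0.
  by rewrite addnS mu_f_stable ?IHm //; lia.
move=> hk; rewrite /mu -(H k (size (trees (nnodes t))).+1 hk) addnC H //.
have := count_size (fun u => tle t u && tle u s) (trees (nnodes t)).
rewrite /cnt; lia.
Qed.

Lemma mu_refl t : mu t t = 1.
Proof. by rewrite /mu /= eqxx. Qed.

Lemma mu_0 t s : ~ tamari_le t s -> mu t s = 0.
Proof.
move=> h; rewrite /mu /=; case: eqP => [e|_]; first by subst; case: h; exact: tle_refl.
by case: tleP.
Qed.

Lemma mu_rec t s : tamari_le t s -> t != s ->
  mu t s = - \sum_(u <- trees (nnodes t) | tle t u && tle u s && (u != s)) mu t u.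
Proof.
move=> hts hne; rewrite {1}/mu /= (negbTE hne); case: tleP => // _.
congr (- _); apply: eq_bigr => u /andP [/andP [/tleP h1 /tleP h2] h3].
apply: mu_fE; have := cnt_lt h1 h2 h3.
have := count_size (fun u => tle t u && tle u s) (trees (nnodes t)).
rewrite /cnt; lia.
Qed.

Lemma sum_pick (T : eqType) (s : seq T) (P : pred T) y (F : T -> rat) :
  uniq s -> \sum_(x <- s | P x && (x == y)) F x = if (y \in s) && P y then F y else 0.
Proof.
elim: s => [|z s IH] /=; first by rewrite big_nil.
move=> /andP [hz hu]; rewrite big_cons IH // in_cons.
case: (eqVneq z y) => [<-|ne] /=; rewrite ?andbT ?(negbTE hz) /=.
  by case: (P z); rewrite ?addr0.
by rewrite andbF; case: (P z).
Qed.

Lemma sum_if_eq (T : eqType) (s : seq T) (P : pred T) y (F : T -> rat) :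
  uniq s -> \sum_(x <- s | P x) (if x == y then F x else 0) =
            if (y \in s) && P y then F y else 0.
Proof. by move=> u; rewrite -big_mkcondr sum_pick. Qed.

Lemma mobius t s :
  \sum_(u <- trees (nnodes t) | tle t u && tle u s) mu t u = (t == s)%:R.
Proof.
case: (tleP t s) => hts; last first.
  rewrite big1 => [|u /andP [/tleP a /tleP b]]; last by case: hts; exact: tle_trans a b.
  by case: eqP => // e; subst; case: hts; exact: tle_refl.
rewrite (bigID (fun u => u == s)) /= sum_pick ?uniq_trees // mem_trees.
rewrite -(tle_nnodes hts) eqxx /=.
have -> : tle t s && tle s s by apply/andP; split; apply/tleP => //; exact: tle_refl.
case: (eqVneq t s) => [e|ne].
  subst; rewrite mu_refl big1 ?addr0 // => u /andP [/andP [/tleP a /tleP b] c].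
  by move: c; rewrite (tle_antisym b a) eqxx.
by rewrite (mu_rec hts ne) addNr.
Qed.



Lemma dbl_pick (T1 T2 : eqType) (s1 : seq T1) (s2 : seq T2) P Q x y (X : rat) :
  uniq s1 -> uniq s2 ->
  \sum_(a <- s1 | P a) \sum_(b <- s2 | Q b) (if (a == x) && (b == y) then X else 0)
  = if (x \in s1) && P x && ((y \in s2) && Q y) then X else 0.
Proof.
move=> u1 u2.
rewrite (eq_bigr (fun a => if a == x then (if (y \in s2) && Q y then X else 0) else 0)).
  by rewrite (@sum_if_eq _ _ _ _ (fun _ => if (y \in s2) && Q y then X else 0)) //; case: (_ && _).
move=> a _; case: (a == x) => /=; last by rewrite big1.
by rewrite (@sum_if_eq _ _ _ _ (fun _ => X)).
Qed.

Lemma mob2 j s a : nnodes s = j ->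
  \sum_(a' <- trees j | tle a' a) mu s a' = (s == a)%:R.
Proof.
move=> <-; rewrite -mobius big_mkcond [RHS]big_mkcond; apply: eq_bigr => u _.
case: (tleP u a) => _; rewrite ?andbT ?andbF //.
by case: tleP => // h; rewrite mu_0.
Qed.

Definition G (r : tree) (j : nat) a b := \sum_(u <- trees (nnodes r) | tsplit u j == (a, b)) mu r u.
Definition H (r : tree) (j k : nat) a b := \sum_(s <- trees j) \sum_(t <- trees k)
   (if over s t == r then mu s a * mu t b else 0).

Lemma SG (r : tree) (j k : nat) (hN : nnodes r = (j + k)%N) a b : nnodes a = j -> nnodes b = k ->
  \sum_(a' <- trees j | tle a' a) \sum_(b' <- trees k | tle b' b) G r j a' b'
  = (r == over a b)%:R.
Proof.
move=> ha hb; rewrite /G.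
under eq_bigr do under eq_bigr do rewrite big_mkcond.
under eq_bigr do rewrite exchange_big.
rewrite exchange_big -mobius big_mkcond [RHS]big_mkcond /=.
rewrite big_seq [RHS]big_seq; apply: eq_bigr => u.
rewrite mem_trees => /eqP hu.
have [s1 s2] := tsplit_size u j; move: s1 s2.
case E: (tsplit u j) => [x y] /= s1 s2.
under eq_bigr do under eq_bigr do rewrite xpair_eqE (eq_sym x) (eq_sym y).
rewrite dbl_pick ?uniq_trees // !mem_trees.
have -> : nnodes x == j by apply/eqP; rewrite s1 hu; lia.
have -> : nnodes y == k by apply/eqP; rewrite s2 hu; lia.
rewrite /=.
have -> : tle x a && tle y b = tle u (over a b).
  apply/idP/idP.
    move=> /andP [/tleP h1 /tleP h2]; apply/tleP; apply/galois; rewrite ha E; split => //.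
  by move=> /tleP /galois; rewrite ha E => -[/= h1 h2]; apply/andP; split; apply/tleP.
case: (tleP u (over a b)) => h; rewrite ?andbT ?andbF //.
by case: tleP => // h'; rewrite mu_0.
Qed.

Lemma SH (r : tree) (j k : nat) (hN : nnodes r = (j + k)%N) a b : nnodes a = j -> nnodes b = k ->
  \sum_(a' <- trees j | tle a' a) \sum_(b' <- trees k | tle b' b) H r j k a' b'
  = (over a b == r)%:R.
Proof.
move=> ha hb; rewrite /H.
under eq_bigr do rewrite exchange_big.
rewrite exchange_big /=.
under eq_bigr do under eq_bigr do rewrite exchange_big.
under eq_bigr do rewrite exchange_big.
rewrite big_seq; under eq_bigr => s hs.
  rewrite big_seq; under eq_bigr => t ht.
    under eq_bigr do under eq_bigr do rewrite (fun_if (fun x => x)).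
    have -> : \sum_(i <- trees j | tle i a) \sum_(i0 <- trees k | tle i0 b)
      (if over s t == r then mu s i * mu t i0 else 0) =
      if over s t == r then (s == a)%:R * (t == b)%:R else 0.
      case: (over s t == r); last by rewrite big1 // => *; rewrite big1.
      rewrite -(mob2 a (_ : nnodes s = j)); last by move: hs; rewrite mem_trees => /eqP.
      rewrite -(mob2 b (_ : nnodes t = k)); last by move: ht; rewrite mem_trees => /eqP.
      by rewrite big_distrlr.
    over.
  over.
under eq_bigr do rewrite -big_seq.
rewrite (eq_bigr (fun s => \sum_(t <- trees k)
   (if (s == a) && (t == b) then (over a b == r)%:R else 0))); last first.
  move=> s _; apply: eq_bigr => t _.
  case: (eqVneq s a) => [->|nsa]; case: (eqVneq t b) => [->|ntb];
    rewrite ?mulr1 ?mulr0 ?mul0r //=; by case: ifP.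
etransitivity; first exact: (@dbl_pick _ _ (trees j) (trees k) (fun x => x \in trees j) xpredT a b _ (uniq_trees j) (uniq_trees k)).
rewrite !mem_trees ha hb !eqxx /=.
by case: (over a b == r).
Qed.


Lemma inversion j k (g h : tree -> tree -> rat) :
  (forall a b, nnodes a = j -> nnodes b = k ->
    \sum_(a' <- trees j | tle a' a) \sum_(b' <- trees k | tle b' b) g a' b' =
    \sum_(a' <- trees j | tle a' a) \sum_(b' <- trees k | tle b' b) h a' b') ->
  forall a b, nnodes a = j -> nnodes b = k -> g a b = h a b.
Proof.
move=> E.
suff S : forall n a b, (rho a + rho b < n)%N -> nnodes a = j -> nnodes b = k -> g a b = h a b.
  by move=> a b; apply: (S (rho a + rho b).+1).
elim=> // n IH a b hn ha hb.
have Z : \sum_(a' <- trees j | tle a' a) \sum_(b' <- trees k | tle b' b) (g a' b' - h a' b') = 0.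
  under eq_bigr do rewrite sumrB.
  by rewrite sumrB E // subrr.
suff Z2 : \sum_(a' <- trees j | tle a' a) \sum_(b' <- trees k | tle b' b) (g a' b' - h a' b')
   = g a b - h a b.
  by apply/eqP; rewrite -subr_eq0 -Z2 Z.
rewrite big_seq_cond (eq_bigr (fun a' => \sum_(b' <- trees k | tle b' b)
   (if (a' == a) && (b' == b) then g a b - h a b else 0))); last first.
  move=> a' /andP [ha' /tleP ta]; rewrite big_seq_cond [RHS]big_seq_cond; apply: eq_bigr.
  move=> b' /andP [hb' /tleP tb].
  case: (eqVneq a' a) => [->|na]; case: (eqVneq b' b) => [->|nb] //=;
  apply/eqP; rewrite subr_eq0; apply/eqP; apply: IH;
  move: ha' hb'; rewrite !mem_trees => /eqP ? /eqP ? //;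
  have := tle_rho ta; have := tle_rho tb; move=> [?|?] [?|?]; subst; first [by case/negP: na | by case/negP: nb | lia].
rewrite -big_seq_cond.
etransitivity; first exact: (@dbl_pick _ _ (trees j) (trees k) (fun x => tle x a) (fun x => tle x b) a b _ (uniq_trees j) (uniq_trees k)).
rewrite !mem_trees ha hb !eqxx /=.
have -> : tle a a by apply/tleP; exact: tle_refl.
by have -> : tle b b by apply/tleP; exact: tle_refl.
Qed.




Lemma core r a b : nnodes r = (nnodes a + nnodes b)%N ->
  G r (nnodes a) a b = H r (nnodes a) (nnodes b) a b.
Proof.
move=> hN; apply: (@inversion (nnodes a) (nnodes b)) => // a' b' ha hb.
by rewrite SG // SH // eq_sym.
Qed.

Lemma LHS_eq r a b : coef2 (Delta (Mb r)) a b = G r (nnodes a) a b.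
Proof.
rewrite /coef2 /Delta big_flatten big_map /Mb big_map big_filter /G.
rewrite big_mkcond [RHS]big_mkcond big_seq [RHS]big_seq; apply: eq_bigr => u.
rewrite mem_trees => /eqP hu; set I := iota 0 _; rewrite big_map /=.
have -> : \sum_(j <- I | tsplit u j == (a, b)) mu r u =
          \sum_(j <- I | (j \in I) && (tsplit u j == (a, b)) && (j == nnodes a)) mu r u.
  rewrite big_seq_cond; apply: eq_bigl => i; case: (boolP (i \in I)) => //= hi.
  case: (eqVneq (tsplit u i) (a, b)) => //= e; apply/esym/eqP.
  have -> : a = (tsplit u i).1 by rewrite e.
  have [s1 _] := tsplit_size u i; rewrite s1; move: hi; rewrite /I mem_iota /=; lia.
rewrite sum_pick ?iota_uniq // /I mem_iota andbA andbb.
case: (tleP r u) => h; last by rewrite mu_0 //; do ? case: ifP.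
case E: (tsplit u (nnodes a) == (a, b)); rewrite ?andbT ?andbF //.
move/eqP: E => E; have [s1 _] := tsplit_size u (nnodes a); rewrite E /= in s1.
rewrite ifT //= ; lia.
Qed.

Definition coef1 (x : elt) (a : tree) : rat := \sum_(p <- x | p.2 == a) p.1.

Lemma coef2_tensor x y a b : coef2 (tensor x y) a b = coef1 x a * coef1 y b.
Proof.
rewrite /coef2 /tensor /coef1 big_mkcond big_allpairs_dep [in RHS]big_mkcond mulr_suml.
apply: eq_bigr => p _; rewrite [in RHS]big_mkcond mulr_sumr; apply: eq_bigr => q _ /=.
rewrite xpair_eqE.
by case: (p.2 == a); case: (q.2 == b); rewrite ?mulr0 ?mul0r.
Qed.

Lemma coef1_Mb s a : coef1 (Mb s) a = mu s a.
Proof.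
rewrite /coef1 /Mb big_map big_filter_cond /= sum_pick ?uniq_trees // mem_trees.
case: (tleP s a) => h; first by rewrite (tle_nnodes h) eqxx.
by rewrite andbF mu_0.
Qed.

Lemma RHS_eq r a b : coef2 (rhs r) a b =
  \sum_(j <- iota 0 (nnodes r).+1) \sum_(s <- trees j) \sum_(t <- trees (nnodes r - j))
     (if over s t == r then mu s a * mu t b else 0).
Proof.
rewrite /coef2 /rhs big_flatten big_map.
rewrite (eq_bigr (fun st => mu st.1 a * mu st.2 b)); last first.
  by move=> st _; rewrite -!coef1_Mb -coef2_tensor.
rewrite /decomps big_filter big_flatten big_map.
apply: eq_bigr => j _; by rewrite big_mkcond big_allpairs.
Qed.

Theorem theorem5p1 (n : nat) (r : tree) :
  nnodes r = n ->
  forall a b : tree, coef2 (Delta (Mb r)) a b = coef2 (rhs r) a b.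
Proof.
move=> _ a b; rewrite LHS_eq RHS_eq.
case: (eqVneq (nnodes a + nnodes b)%N (nnodes r)) => hab.
  rewrite core; last by rewrite hab.
  rewrite (eq_bigr (fun j => if j == nnodes a then H r (nnodes a) (nnodes b) a b else 0)).
    symmetry; etransitivity; first exact: (@sum_if_eq _ (iota 0 (nnodes r).+1) xpredT (nnodes a) (fun _ => H r (nnodes a) (nnodes b) a b) (iota_uniq _ _)).
    by rewrite mem_iota ifT //=; lia.
  move=> j _; case: eqVneq => [->|ne].
    have -> : (nnodes r - nnodes a = nnodes b)%N by lia.
    by [].
  rewrite big1_seq // => s /andP [_ hs]; rewrite big1 // => t _.
  case: ifP => // _; case: (tleP s a) => h; last by rewrite mu_0 ?mul0r.
  move: hs; rewrite mem_trees (tle_nnodes h) => /eqP e; by rewrite e eqxx in ne.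
rewrite /G big1_seq; last first.
  move=> u /andP [/eqP E hu]; exfalso; move: hu; rewrite mem_trees => /eqP hu.
  have [s1 s2] := tsplit_size u (nnodes a); rewrite E /= in s1 s2.
  move/eqP: hab; lia.
rewrite big1_seq // => j /andP [_ hj]; rewrite big1_seq // => s /andP [_ hs].
rewrite big1_seq // => t /andP [_ ht].
case: ifP => // _; case: (tleP s a) => h1; last by rewrite mu_0 ?mul0r.
case: (tleP t b) => h2; last by rewrite (mu_0 h2) mulr0.
exfalso; move: hj hs ht; rewrite mem_iota !mem_trees (tle_nnodes h1) (tle_nnodes h2).
move=> hj /eqP e1 /eqP e2; move/eqP: hab; lia.
Qed.
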